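(* Let $R$ be a noetherian ring and $M$ a finitely generated $R$-module. (i) $\mathrm{Fitt}^0_R(M)\subseteq\mathrm{char}_R(M)$. (ii) If the projective dimension of $M$ is at most $1$, then $\mathrm{Fitt}^0_R(M)=\mathrm{char}_R(M)$.
   Context: $M^*=\mathrm{Hom}_R(M,R)$, $\bigcap^n_RM=(\bigwedge^n_R(M^* ))^*$. For a finitely generated $R$-module $M$, choose $n>0$ and an exact sequence $0\to N\to R^n\to M\to0$ and set $\mathrm{char}_R(M)=\mathrm{im}(\bigcap^n_RN\to\bigcap^n_RR^n=R)$ (independent of the choice). $\mathrm{Fitt}^0_R$ is the zeroth Fitting ideal. *)

(* Defs.v *)
From HB Require Import structures.
From mathcomp Require Import all_boot all_order all_algebra.
Set Implicit Arguments. Unset Strict Implicit. Unset Printing Implicit Defensive.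
Import Order.TTheory GRing.Theory Num.Theory.
Local Open Scope ring_scope.

Section Defs.
Variable R : comNzRingType.

Definition is_ideal (I : R -> Prop) : Prop :=
  [/\ I 0, (forall x y, I x -> I y -> I (x + y)) & (forall a x, I x -> I (a * x))].

Definition ideal_gen (S : R -> Prop) : R -> Prop :=
  fun x => exists (k : nat) (a s : 'I_k -> R),
    (forall i, S (s i)) /\ x = \sum_(i < k) a i * s i.

Definition noetherian : Prop :=
  forall I : R -> Prop, is_ideal I ->
    exists (k : nat) (s : 'I_k -> R), forall x, I x <-> ideal_gen (fun y => exists i, y = s i) x.

Definition surjective_map (A B : Type) (f : A -> B) := forall b, exists a, f a = b.

Definition projective (P : lmodType R) : Prop :=
  forall (A B : lmodType R) (g : {linear A -> B}) (f : {linear P -> B}),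
    surjective_map g -> exists h : {linear P -> A}, forall x, g (h x) = f x.

Definition proj_dim_le1 (M : lmodType R) : Prop :=
  exists (P0 P1 : lmodType R) (i : {linear P1 -> P0}) (p : {linear P0 -> M}),
    [/\ projective P0, projective P1, injective i, surjective_map p &
        forall x, p x = 0 <-> exists y, x = i y].

Variables (M : lmodType R) (n : nat) (pi : {linear 'rV[R]_n -> M}).
(* presentation 0 -> N -> R^n -> M -> 0 with N = ker pi *)
Definition ker_pres (v : 'rV[R]_n) : Prop := pi v = 0.

(* Fitt^0 : ideal generated by the n x n minors of the relation matrices,
   i.e. by the determinants of n-tuples of elements of N *)
Definition Fitt0 : R -> Prop :=
  ideal_gen (fun r => exists A : 'M[R]_n, (forall i, ker_pres (row i A)) /\ r = \det A).

(* elements of N^* = Hom_R(N,R), represented by functions R^n -> R considered on N *)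
Definition Nlin (phi : 'rV[R]_n -> R) : Prop :=
  forall a u v, ker_pres u -> ker_pres v -> phi (a *: u + v) = a * phi u + phi v.

Definition Neq (phi psi : 'rV[R]_n -> R) : Prop := forall v, ker_pres v -> phi v = psi v.

Definition upd (g : 'I_n -> 'rV[R]_n -> R) (i : 'I_n) (phi : 'rV[R]_n -> R) :=
  fun j => if j == i then phi else g j.

(* elements of (/\^n N^* )^* = alternating n-linear forms on N^* *)
Definition alt_form (Phi : ('I_n -> 'rV[R]_n -> R) -> R) : Prop :=
  [/\ (* well-defined on N^* *)
      (forall g g', (forall i, Nlin (g i)) -> (forall i, Nlin (g' i)) ->
          (forall i, Neq (g i) (g' i)) -> Phi g = Phi g'),
      (forall g i a phi psi, (forall j, Nlin (g j)) -> Nlin phi -> Nlin psi ->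
          Phi (upd g i (fun v => a * phi v + psi v)) =
          a * Phi (upd g i phi) + Phi (upd g i psi)) &
      (forall g i j, (forall k, Nlin (g k)) -> i != j -> Neq (g i) (g j) -> Phi g = 0)].

(* char_R(M) = image of \bigcap^n N -> \bigcap^n R^n = R; the identification
   \bigcap^n R^n = R is evaluation at e_1^* /\ ... /\ e_n^* *)
Definition char_pres : R -> Prop :=
  fun r => exists Phi, alt_form Phi /\ r = Phi (fun i v => v ord0 i).

End Defs.

(* Main.v *)
Require Import Defs.
From HB Require Import structures.
From mathcomp Require Import all_boot all_order all_algebra.
From Stdlib Require Import FunctionalExtensionality IndefiniteDescription Classical_Prop.
From mathcomp Require Import ring fingroup perm.
Set Implicit Arguments. Unset Strict Implicit. Unset Printing Implicit Defensive.
Import Order.TTheory GRing.Theory Num.Theory.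
Local Open Scope ring_scope.
Section IdealGen.
Variable R : comNzRingType.
Implicit Types S : R -> Prop.

Lemma ig0 S : ideal_gen S 0.
Proof. by exists 0%N, (fun _ => 0), (fun _ => 0); split => [[]//|]; rewrite big_ord0. Qed.

Lemma igD S x y : ideal_gen S x -> ideal_gen S y -> ideal_gen S (x + y).
Proof.
move=> [k1 [a1 [s1 [H1 ->]]]] [k2 [a2 [s2 [H2 ->]]]].
exists (k1 + k2)%N, (fun i => match split i with inl j => a1 j | inr j => a2 j end),
  (fun i => match split i with inl j => s1 j | inr j => s2 j end).
split; first by move=> i; case: split.
by rewrite big_split_ord /=; congr (_ + _); apply: eq_bigr => i _;
  rewrite ?(unsplitK (inl _ : 'I_k1 + 'I_k2)) ?(unsplitK (inr _ : 'I_k1 + 'I_k2)).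
Qed.

Lemma igM S a x : ideal_gen S x -> ideal_gen S (a * x).
Proof.
move=> [k [b [s [H ->]]]]; exists k, (fun i => a * b i), s; split => //.
by rewrite big_distrr; apply: eq_bigr => i _ /=; rewrite mulrA.
Qed.

Lemma igS S x : S x -> ideal_gen S x.
Proof.
move=> Sx; exists 1%N, (fun _ => 1), (fun _ => x); split => //.
by rewrite big_ord1 mul1r.
Qed.

Lemma ig_sum S (I : Type) (r : seq I) (F : I -> R) :
  (forall i, ideal_gen S (F i)) -> ideal_gen S (\sum_(i <- r) F i).
Proof. by move=> H; apply: (big_ind (ideal_gen S)) => //; [apply: ig0| apply: igD]. Qed.

End IdealGen.
Section PartI.
Variables (R : comNzRingType) (M : lmodType R) (n : nat) (pi : {linear 'rV[R]_n -> M}).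

Lemma alt_zero : alt_form pi (fun _ => 0).
Proof. by split => // *; rewrite mulr0 addr0. Qed.

Lemma alt_comb a Phi1 Phi2 : alt_form pi Phi1 -> alt_form pi Phi2 ->
  alt_form pi (fun g => a * Phi1 g + Phi2 g).
Proof.
move=> [W1 L1 A1] [W2 L2 A2]; split.
- by move=> g g' Hg Hg' E; rewrite (W1 g g') // (W2 g g').
- move=> g i b phi psi Hg Hphi Hpsi; rewrite L1 // L2 //.
  ring.
- by move=> g i j Hg nij E; rewrite (A1 g i j) // (A2 g i j) // mulr0 addr0.
Qed.

Lemma alt_det (A : 'M[R]_n) : (forall i, ker_pres pi (row i A)) ->
  alt_form pi (fun g => \det (\matrix_(i, j) g i (row j A))).
Proof.
move=> HA; split.
- move=> g g' Hg Hg' E; congr (\det _); apply/matrixP => i j; rewrite !mxE.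
  exact: E.
- move=> g i a phi psi Hg Hphi Hpsi.
  rewrite -[X in _ = _ + X]mul1r; apply: (@determinant_multilinear _ _ _ _ _ i a 1).
  + by apply/rowP => j; rewrite !mxE /upd eqxx mul1r.
  + by apply/matrixP => k j; rewrite !mxE /upd eq_sym (negbTE (neq_lift _ _)).
  + by apply/matrixP => k j; rewrite !mxE /upd eq_sym (negbTE (neq_lift _ _)).
- move=> g i j Hg nij E; apply: (determinant_alternate nij) => k; rewrite !mxE.
  exact: E.
Qed.

Lemma char_pres_comb a x y : char_pres pi x -> char_pres pi y -> char_pres pi (a * x + y).
Proof.
move=> [P1 [H1 ->]] [P2 [H2 ->]].
by exists (fun g => a * P1 g + P2 g); split => //; apply: alt_comb.
Qed.

Lemma char_pres0 : char_pres pi 0.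
Proof. by exists (fun _ => 0); split => //; apply: alt_zero. Qed.

Lemma fitt_char r : Fitt0 pi r -> char_pres pi r.
Proof.
move=> [k [a [s [Hs ->]]]].
apply: (big_ind (char_pres pi)); first exact: char_pres0.
  by move=> x y Hx Hy; rewrite -(mul1r x); apply: char_pres_comb.
move=> i _; rewrite -[_ * _]addr0; apply: char_pres_comb; last exact: char_pres0.
have [A [HA ->]] := Hs i.
exists (fun g => \det (\matrix_(i, j) g i (row j A))); split; first exact: alt_det.
by rewrite -det_tr; congr (\det _); apply/matrixP => p q; rewrite !mxE.
Qed.
End PartI.
Section AltForm.
Variables (R : comNzRingType) (M : lmodType R) (n : nat) (pi : {linear 'rV[R]_n -> M}).
Variable Phi : ('I_n -> 'rV[R]_n -> R) -> R.
Hypothesis HPhi : alt_form pi Phi.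

Local Notation Nlin := (Nlin pi).

Lemma Nlin_comb a phi psi : Nlin phi -> Nlin psi -> Nlin (fun v => a * phi v + psi v).
Proof.
move=> H1 H2 b u v Hu Hv; rewrite H1 // H2 //; ring.
Qed.

Lemma Nlin0 : Nlin (fun _ => 0).
Proof. by move=> *; rewrite mulr0 addr0. Qed.

Lemma Nlin_sum (J : Type) (s : seq J) (c : J -> R) (f : J -> 'rV[R]_n -> R) :
  (forall j, Nlin (f j)) -> Nlin (fun v => \sum_(j <- s) c j * f j v).
Proof.
move=> Hf; elim: s => [|j s IH].
  by move=> *; rewrite !big_nil mulr0 addr0.
move=> a u v Hu Hv; rewrite !big_cons.
have := Nlin_comb (c j) (Hf j) IH a Hu Hv; by [].
Qed.

Lemma Nlin_upd g i phi : (forall j, Nlin (g j)) -> Nlin phi -> forall j, Nlin (upd g i phi j).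
Proof. by move=> Hg Hphi j; rewrite /upd; case: eqP. Qed.

Lemma Nlin_coord i : Nlin (fun v => v 0 i).
Proof. by move=> a u v _ _; rewrite !mxE. Qed.

Lemma Phi_zero g i : (forall j, Nlin (g j)) -> Phi (upd g i (fun _ => 0)) = 0.
Proof.
move=> Hg; case: HPhi => _ L _.
have := L g i 1 (fun _ => 0) (fun _ => 0) Hg Nlin0 Nlin0.
have -> : (fun _ : 'rV[R]_n => 1 * 0 + 0) = (fun _ => 0 : R).
  by apply: functional_extensionality => v; rewrite mulr0 addr0.
rewrite mul1r => /(congr1 (fun t => t - Phi (upd g i (fun _ => 0)))).
by rewrite addrK subrr.
Qed.

Lemma Phi_sum g i (J : Type) (s : seq J) (c : J -> R) (f : J -> 'rV[R]_n -> R) :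
  (forall j, Nlin (g j)) -> (forall j, Nlin (f j)) ->
  Phi (upd g i (fun v => \sum_(j <- s) c j * f j v)) =
  \sum_(j <- s) c j * Phi (upd g i (f j)).
Proof.
move=> Hg Hf; case: HPhi => _ L _; elim: s => [|j s IH].
  have -> : (fun v => \sum_(j <- [::]) c j * f j v) = (fun _ => 0 : R).
    by apply: functional_extensionality => v; rewrite big_nil.
  by rewrite big_nil Phi_zero.
rewrite big_cons -IH -(L g i (c j) (f j) _ Hg (Hf j) (Nlin_sum s c Hf)).
have -> : (fun v => \sum_(j0 <- j :: s) c j0 * f j0 v) =
  (fun v => c j * f j v + \sum_(j0 <- s) c j0 * f j0 v).
  by apply: functional_extensionality => v; rewrite big_cons.
by [].
Qed.

Ltac updtac := apply: functional_extensionality => ?; rewrite /upd;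
  repeat (case: eqP => ?; subst); try congruence.

Lemma Phi_tperm g a b : (forall j, Nlin (g j)) -> a != b ->
  Phi (fun i => g (tperm a b i)) = - Phi g.
Proof.
move=> Hg nab; have nab' : a <> b by apply/eqP.
case: HPhi => W L A.
pose u := fun v => 1 * g a v + g b v.
have Hu : Nlin u by apply: Nlin_comb.
have Hgb := Nlin_upd b Hg Hu.
have H0 : Phi (upd (upd g b u) a u) = 0.
  apply: (A _ a b) => //; first exact: Nlin_upd.
  by move=> v _; rewrite /upd !eqxx; case: eqP.
rewrite L // in H0.
have E1 : upd (upd g b u) a (g a) = upd g b u.
  by updtac.
have E2 : upd (upd g b u) a (g b) = upd (upd g a (g b)) b u.
  by updtac.
have Hga := Nlin_upd a Hg (Hg b).
rewrite E1 E2 /u !L // in H0.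
have E3 : upd g b (g b) = g.
  by updtac.
have Z1 : Phi (upd g b (g a)) = 0.
  apply: (A _ a b) => //; first exact: Nlin_upd.
  by move=> v _; rewrite /upd eqxx (negbTE nab).
have Z2 : Phi (upd (upd g a (g b)) b (g b)) = 0.
  apply: (A _ a b) => //; first by apply: Nlin_upd => //; apply: Nlin_upd.
  by move=> v _; rewrite /upd eqxx (negbTE nab) eqxx.
have E4 : upd (upd g a (g b)) b (g a) = (fun i => g (tperm a b i)).
  apply: functional_extensionality => k; rewrite /upd.
  case: tpermP => [->|->|/eqP nka /eqP nkb]; rewrite ?eqxx.
  - by rewrite (negbTE nab).
  - by [].
  - by rewrite (negbTE nka) (negbTE nkb).
rewrite E3 Z1 Z2 E4 !mul1r add0r addr0 in H0.
by apply/eqP; rewrite -subr_eq0 opprK addrC H0.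
Qed.

Lemma Phi_perm g (s : 'S_n) : (forall j, Nlin (g j)) ->
  Phi (fun i => g (s i)) = (-1) ^+ s * Phi g.
Proof.
case: (prod_tpermP s) => ts -> {s}; elim: ts g => [|t ts IH] g /= Hts Hg.
  rewrite big_nil odd_perm1 expr0 mul1r; congr Phi.
  by apply: functional_extensionality => i; rewrite perm1.
case/andP: Hts => Ht Hts; rewrite big_cons.
set P := (\prod_(t <- ts) tperm t.1 t.2)%g.
have -> : (fun i => g ((tperm t.1 t.2 * P)%g i)) =
  (fun i => (fun k => g (P k)) (tperm t.1 t.2 i)).
  by apply: functional_extensionality => i; rewrite permM.
rewrite (@Phi_tperm (fun k => g (P k)) t.1 t.2 (fun j => Hg (P j)) Ht).
have := IH g Hts Hg; rewrite -/P => ->. by rewrite odd_permM odd_tperm Ht signr_addb expr1 mulN1r mulNr.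
Qed.


Lemma Phi_expand (J : finType) (j0 : J) (c : 'I_n -> J -> R) (f : J -> 'rV[R]_n -> R) :
  (forall j, Nlin (f j)) ->
  forall r : seq 'I_n, uniq r -> forall g, (forall i, Nlin (g i)) ->
  Phi (fun i => if i \in r then (fun v => \sum_(j : J) c i j * f j v) else g i) =
  \sum_(k : {ffun 'I_n -> J} | [forall i, (i \in r) || (k i == j0)])
     (\prod_(i <- r) c i (k i)) * Phi (fun i => if i \in r then f (k i) else g i).
Proof.
move=> Hf; elim=> [|a r IH] /= Hu g Hg.
  rewrite (eq_bigl (pred1 [ffun => j0])) => [|k]; first by rewrite big_pred1_eq big_nil mul1r.
  apply/forallP/eqP => [H|->]; last by move=> i; rewrite ffunE eqxx ?orbT.
  by apply/ffunP => i; rewrite ffunE; move: (H i); rewrite ?in_nil => /eqP.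
case/andP: Hu => nar Hur.
pose psi i := fun v => \sum_(j : J) c i j * f j v.
have Hpsi : forall i, Nlin (psi i) by move=> i; apply: Nlin_sum.
have -> : (fun i => if i \in a :: r then psi i else g i) =
          (fun i => if i \in r then psi i else upd g a (psi a) i).
  apply: functional_extensionality => i; rewrite in_cons /upd.
  by case: eqP => [->|]; [rewrite (negbTE nar)|].
rewrite (IH Hur _ (Nlin_upd a Hg (Hpsi a))).
pose h (k : {ffun 'I_n -> J}) := fun i => if i \in r then f (k i) else g i.
have Hh : forall k i, Nlin (h k i) by move=> k i; rewrite /h; case: ifP.
have E1 : forall k : {ffun 'I_n -> J}, (fun i => if i \in r then f (k i) else upd g a (psi a) i) = upd (h k) a (psi a).
  move=> k; apply: functional_extensionality => i; rewrite /upd /h.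
  by case: eqP => [->|]; [rewrite (negbTE nar)|].
apply: (@etrans _ _ (\sum_(k : {ffun 'I_n -> J} | [forall i, (i \in r) || (k i == j0)])
     \prod_(i <- r) c i (k i) * Phi (upd (h k) a (psi a)))).
  by apply: eq_bigr => k _; congr (_ * Phi _); exact: E1.
have PS : forall k, Phi (upd (h k) a (psi a)) = \sum_(j : J) c a j * Phi (upd (h k) a (f j)).
  by move=> k; apply: Phi_sum.
apply: (@etrans _ _ (\sum_(k : {ffun 'I_n -> J} | [forall i, (i \in r) || (k i == j0)])
     \sum_(j : J) c a j * \prod_(i <- r) c i (k i) * Phi (upd (h k) a (f j)))).
  apply: eq_bigr => k _; rewrite PS big_distrr; apply: eq_bigr => j _ /=.
  by rewrite mulrCA mulrA.
rewrite exchange_big /=.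
rewrite (partition_big (fun k : {ffun 'I_n -> J} => k a) predT) //=.
apply: eq_bigr => j _.
pose seti j (k : {ffun 'I_n -> J}) := [ffun i => if i == a then j else k i].
rewrite [RHS](reindex_onto (seti j) (seti j0)); last first.
  move=> k /andP[_ /eqP <-]; apply/ffunP => i; rewrite !ffunE.
  by case: eqP => [->|].
apply: eq_big => [k|k Hk].
  apply/idP/idP.
    move=> Hk; apply/andP; split; last first.
      apply/eqP/ffunP => i; rewrite !ffunE; case: eqP => [->|//].
      by move/forallP: Hk => /(_ a); rewrite (negbTE nar) /= => /eqP.
    apply/andP; split; last by rewrite ffunE eqxx.
    apply/forallP => i; rewrite in_cons ffunE.
    by case: eqP => //= _; move/forallP: Hk => /(_ i).
  case/andP => /andP[/forallP Hk1 _] /eqP Hk2; apply/forallP => i.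
  have := Hk1 i; rewrite in_cons ffunE.
  have [->|nia] := eqVneq i a.
    by move=> _; rewrite -Hk2 ffunE eqxx eqxx orbT.
  by [].
rewrite big_cons ffunE eqxx; congr (_ * _ * _).
  apply: eq_big_seq => i ir; rewrite ffunE; case: eqP => // ei.
  by move: ir; rewrite ei (negbTE nar).
congr Phi; apply: functional_extensionality => i; rewrite /upd /h in_cons ffunE.
by case: eqP.
Qed.


Lemma char_fitt (m : nat) (x : 'I_m -> 'rV[R]_n) (f : 'I_m -> 'rV[R]_n -> R) :
  (0 < n)%N -> (forall k, pi (x k) = 0) -> (forall k, Nlin (f k)) ->
  (forall v, pi v = 0 -> v = \sum_k f k v *: x k) -> Fitt0 pi (Phi (fun i v => v 0 i)).
Proof.
move=> n0 Hx Hf Hdb; case: (HPhi) => W L A.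
pose c (i : 'I_n) (k : 'I_m) := x k 0 i.
pose psi i := fun v => \sum_(k : 'I_m) c i k * f k v.
have Hpsi : forall i, Nlin (psi i) by move=> i; apply: Nlin_sum.
have -> : Phi (fun i v => v 0 i) = Phi psi.
  apply: W => // [i|i v Hv]; first exact: Nlin_coord.
  rewrite {1}(Hdb v Hv) summxE /psi; apply: eq_bigr => k _.
  by rewrite mxE mulrC.
case: m => [|m'] in x f Hx Hf Hdb c psi Hpsi *.
  have i0 : 'I_n by exact: Ordinal n0.
  have -> : psi = upd psi i0 (fun _ => 0).
    apply: functional_extensionality => i; rewrite /upd; case: eqP => // _.
    by apply: functional_extensionality => v; rewrite /psi big_ord0.
  rewrite Phi_zero //; exact: ig0.
have -> : psi = (fun i => if i \in index_enum 'I_n then psi i else psi i).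
  by apply: functional_extensionality => i; rewrite if_same.
rewrite (@Phi_expand _ ord0 c f Hf _ (index_enum_uniq _) psi Hpsi).
rewrite (eq_bigl xpredT) => [|k]; last by apply/forallP => i; rewrite mem_index_enum.
pose F (k : {ffun 'I_n -> 'I_m'.+1}) :=
  (\prod_(i <- index_enum 'I_n) c i (k i)) * Phi (fun i => f (k i)).
rewrite (eq_bigr F) => [|k _]; last first.
  by rewrite /F; congr (_ * Phi _); apply: functional_extensionality => i; rewrite mem_index_enum.
rewrite (bigID (fun k : {ffun 'I_n -> 'I_m'.+1} => injectiveb k)) /= [X in _ + X]big1 ?addr0; last first.
  move=> k /injectivePn [i1 [i2 ni12 e12]].
  rewrite /F (A _ i1 i2) ?mulr0 //; try (by move=> i; apply: Hf).
  by move=> v _; rewrite e12.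
rewrite (partition_big (fun k : {ffun 'I_n -> 'I_m'.+1} => [set k i | i : 'I_n]) xpredT) //=.
apply: ig_sum => T.
case: (pickP (fun k : {ffun 'I_n -> 'I_m'.+1} => injectiveb k && ([set k i | i : 'I_n] == T)))
  => [k0 /andP[/injectiveP k0i /eqP k0T]|none]; last first.
  rewrite big_pred0; [exact: ig0 | exact: none].
pose hh (s : 'S_n) : {ffun 'I_n -> 'I_m'.+1} := [ffun i => k0 (s i)].
rewrite (eq_bigl (fun k => k \in hh @: setT)) => [|k]; last first.
  apply/andP/imsetP => [[/injectiveP ki /eqP kT]|[s _ ->]].
    have : forall i, exists j, k0 j = k i.
      move=> i; have : k i \in T by rewrite -kT; apply/imsetP; exists i.
      by rewrite -k0T => /imsetP [j _ ->]; exists j.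
    case/fin_all_exists => s Hs.
    have sinj : injective s by move=> i1 i2 e; apply: ki; rewrite -!Hs e.
    exists (perm sinj) => //; apply/ffunP => i; rewrite ffunE permE Hs.
    by [].
  split; first by apply/injectiveP => i1 i2; rewrite !ffunE => /k0i /perm_inj.
  rewrite -k0T; apply/eqP/setP => y; apply/imsetP/imsetP => [[i _ ->]|[i _ ->]].
    by exists (s i); rewrite ?ffunE.
  by exists (s^-1 i)%g; rewrite ?ffunE ?permKV.
rewrite big_imset /=; last first.
  move=> s1 s2 _ _ /ffunP e; apply/permP => i; apply: k0i.
  by move: (e i); rewrite !ffunE.
rewrite (eq_bigr (fun s : 'S_n => (-1) ^+ s * (\prod_i c i (k0 (s i))) * Phi (fun i => f (k0 i)))) => [|s _]; last first.
  rewrite /F.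
  have -> : (fun i => f (hh s i)) = (fun i => (fun j => f (k0 j)) (s i)).
    by apply: functional_extensionality => i; rewrite ffunE.
  rewrite (@Phi_perm (fun j => f (k0 j)) s (fun j => Hf (k0 j))).
  rewrite mulrCA mulrA; congr (_ * _ * _); apply: eq_bigr => i _.
  by rewrite ffunE.
rewrite -big_distrl /= mulrC; apply: igM; apply: igS.
exists (\matrix_(j, l) x (k0 j) 0 l); split.
  move=> j; rewrite /ker_pres.
  have -> : row j (\matrix_(j, l) x (k0 j) 0 l) = x (k0 j) by apply/rowP => l; rewrite !mxE.
  exact: Hx.
rewrite -det_tr /determinant; apply: eq_big => [s|s _]; first by rewrite inE.
by congr (_ * _); apply: eq_bigr => i _; rewrite !mxE.
Qed.

End AltForm.
Section FG.
Variable R : comNzRingType.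

Lemma regroup (V : lmodType R) m p (t : 'I_p -> 'I_m) (a : 'I_p -> R) (y : 'I_m -> V) :
  \sum_i a i *: y (t i) = \sum_j (\sum_(i | t i == j) a i) *: y j.
Proof.
rewrite (partition_big t xpredT) //; apply: eq_bigr => j _.
by rewrite scaler_suml; apply: eq_bigr => i /eqP ->.
Qed.

Lemma row_mx0_sum k (I : Type) (s : seq I) (F : I -> 'rV[R]_k) :
  row_mx (0 : 'rV[R]_1) (\sum_(l <- s) F l) = \sum_(l <- s) row_mx 0 (F l).
Proof.
apply: (big_morph (fun u : 'rV[R]_k => row_mx (0 : 'rV[R]_1) u)).
  by move=> u1 u2; rewrite add_row_mx addr0.
by rewrite row_mx0.
Qed.

Definition submod k (S : 'rV[R]_k -> Prop) :=
  [/\ S 0, (forall u v, S u -> S v -> S (u + v)) & (forall a u, S u -> S (a *: u))].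

Lemma submod_sum k S (I : Type) (s : seq I) (F : I -> 'rV[R]_k) :
  submod S -> (forall i, S (F i)) -> S (\sum_(i <- s) F i).
Proof. by case=> S0 SD _ HF; apply: big_ind. Qed.

Lemma fg_sub : noetherian R -> forall k (S : 'rV[R]_k -> Prop), submod S ->
  exists m (x : 'I_m -> 'rV[R]_k), (forall j, S (x j)) /\
    forall v, S v -> exists a : 'I_m -> R, v = \sum_j a j *: x j.
Proof.
move=> HN; elim=> [|k IH] S HS.
  exists 0%N, (fun _ => 0); split; first by case: HS.
  by move=> v _; exists (fun _ => 0); rewrite big_ord0 thinmx0.
case: (HS) => S0 SD SZ.
pose I a := exists v : 'rV[R]_(1 + k), S v /\ v 0 ord0 = a.
have HI : is_ideal I.
  split; first by exists 0; rewrite mxE.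
    by move=> _ _ [u [Su <-]] [v [Sv <-]]; exists (u + v); rewrite mxE; split => //; apply: (SD).
  by move=> a _ [v [Sv <-]]; exists (a *: v); rewrite mxE; split => //; apply: (SZ).
have [p [s Hs]] := HN I HI.
have : forall i, exists w, S w /\ w 0 ord0 = s i.
  by move=> i; apply/(Hs (s i)); apply: igS; exists i.
case/fin_all_exists => w Hw.
pose S' (u : 'rV[R]_k) := S (row_mx (0 : 'rV[R]_1) u).
have HS' : submod S'.
  split; first by rewrite /S' row_mx0.
    by move=> u v Su Sv; rewrite /S' -[0 : 'rV_1]addr0 -add_row_mx; apply: (SD).
  by move=> a u Su; rewrite /S' -(scaler0 _ a) -scale_row_mx; apply: (SZ).
have [q [y [Hy Hspan]]] := IH S' HS'.
exists (p + q)%N, (fun j => match split j with inl i => w i | inr l => row_mx (0 : 'rV[R]_1) (y l) end).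
split; first by move=> j; case: split => [i|l]; [case: (Hw i)|apply: Hy].
move=> v Sv.
have : I (v 0 ord0) by exists v.
move/Hs => [p' [a [s' [Hs' Hv0]]]].
have [t Ht] := fin_all_exists (fun i => match Hs' i with ex_intro l e => ex_intro _ l e end).
pose v' := v - \sum_i a i *: w (t i).
have Sv' : S v'.
  apply: (SD) => //; rewrite -scaleN1r; apply: (SZ); apply: (submod_sum _ HS) => i.
  by apply: (SZ); case: (Hw (t i)).
have v'0 : v' 0 ord0 = 0.
  rewrite /v' !mxE summxE Hv0. apply/eqP; rewrite subr_eq0; apply/eqP; apply: eq_bigr => i _.
  by rewrite mxE Ht; case: (Hw (t i)) => _ ->.
have Ev : v = \sum_i a i *: w (t i) + v' by rewrite /v' addrC subrK.
clearbody v'.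
have Lv' : lsubmx (v' : 'rV[R]_(1 + k)) = 0.
  apply/rowP => j; rewrite !mxE ord1.
  by rewrite -v'0; congr (v' 0 _); apply: val_inj.
have : S' (rsubmx (v' : 'rV[R]_(1 + k))) by rewrite /S' -Lv' hsubmxK.
move/Hspan => [b Hb].
exists (fun j => match split j with
                 | inl i => \sum_(i' | t i' == i) a i'
                 | inr l => b l end).
rewrite big_split_ord /=.
rewrite Ev.
congr (_ + _).
  rewrite regroup; apply: eq_bigr => i _.
  by have -> : split (lshift q i) = inl i := unsplitK (inl i : 'I_p + 'I_q).
rewrite -(hsubmxK (v' : 'rV[R]_(1 + k))) Lv' Hb row_mx0_sum; apply: eq_bigr => l _.
have -> : split (rshift p l) = inr l := unsplitK (inr l : 'I_p + 'I_q).
by apply/rowP => j; rewrite !mxE; case: split => ?; rewrite !mxE ?mulr0.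
Qed.

End FG.
Section SubN.
Variables (R : comNzRingType) (M : lmodType R) (n : nat) (pi : {linear 'rV[R]_n -> M}).
Definition kerp : {pred 'rV[R]_n} := [pred v | pi v == 0].
Fact kerp_submod : submod_closed kerp.
Proof.
split; first by rewrite inE linear0.
by move=> a u v; rewrite !inE linearP => /eqP -> /eqP ->; rewrite scaler0 addr0.
Qed.
HB.instance Definition _ := GRing.isSubmodClosed.Build R _ kerp kerp_submod.
Record Nt := NT { nval :> 'rV[R]_n; nvalP : nval \in kerp }.
HB.instance Definition _ := [isSub for nval].
HB.instance Definition _ := [Choice of Nt by <:].
HB.instance Definition _ := [SubChoice_isSubLmodule of Nt by <:].
End SubN.

Section CR.
Variables (R : comNzRingType) (M : lmodType R) (n : nat) (pi : {linear 'rV[R]_n -> M}).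
Variables (U : lmodType R) (h : {linear U -> 'rV[R]_n}) (H : forall u, pi (h u) = 0).
Definition crf (u : U) : Nt pi := NT (introT eqP (H u) : h u \in kerp pi).
Fact crf_lin : linear crf.
Proof. by move=> a u v; apply: val_inj; rewrite /= linearP. Qed.
HB.instance Definition _ := GRing.isLinear.Build R U (Nt pi) _ crf crf_lin.
Lemma crfE u : val (crf u) = h u. Proof. by []. Qed.
End CR.

Section DualBasis.
Variables (R : comNzRingType) (M : lmodType R) (n : nat) (pi : {linear 'rV[R]_n -> M}).

Lemma dual_basis : noetherian R -> surjective_map pi -> proj_dim_le1 M ->
  exists m (x : 'I_m -> 'rV[R]_n) (f : 'I_m -> 'rV[R]_n -> R),
    [/\ (forall k, pi (x k) = 0), (forall k, Nlin pi (f k)) &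
        forall v, pi v = 0 -> v = \sum_k f k v *: x k].
Proof.
move=> HN pisurj [P0 [P1 [i [p [HP0 HP1 iinj psurj Hex]]]]].
have HS : submod (fun v : 'rV[R]_n => pi v = 0).
  split; first by rewrite linear0.
    by move=> u v Hu Hv; rewrite linearD Hu Hv addr0.
  by move=> a u Hu; rewrite linearZ Hu; apply: scaler0.
have [m [x [Hx Hspan]]] := fg_sub HN HS.
have pi0 : forall y, p (i y) = 0 by move=> y; apply/Hex; exists y.
have [sigma Hsig] := HP0 _ _ pi p pisurj.
have [qq Hqq] := fin_all_exists (fun j : 'I_n => psurj (pi (delta_mx 0 j))).
pose tau (v : 'rV[R]_n) := \sum_j v 0 j *: qq j.
have ptau : forall v, p (tau v) = pi v.
  move=> v; rewrite /tau linear_sum {2}(row_sum_delta v) linear_sum.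
  by apply: eq_bigr => j _; rewrite !linearZ Hqq.
have tauL : forall a u v, tau (a *: u + v) = a *: tau u + tau v.
  move=> a u v; rewrite /tau scaler_sumr -big_split; apply: eq_bigr => j _.
  by rewrite !mxE scalerDl scalerA.
pose D j := delta_mx 0 j - sigma (qq j).
have HD : forall j, pi (D j) = 0.
  by move=> j; rewrite linearB Hsig Hqq subrr.
have [C HC] := fin_all_exists (fun j => Hspan (D j) (HD j)).
pose X : 'M[R]_(m, n) := \matrix_k x k.
have HX : forall a : 'rV[R]_m, a *m X = \sum_k a 0 k *: x k.
  by move=> a; rewrite mulmx_sum_row; apply: eq_bigr => k _; rewrite rowK.
have HgX : forall a : 'rV[R]_m, pi (mulmxr X a) = 0.
  by move=> a; rewrite /= HX; apply: (submod_sum _ HS) => k; case: HS => _ _; apply.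
pose gam := crf HgX.
have gsurj : surjective_map gam.
  move=> w; have [a Ha] := Hspan (val w) (eqP (valP w)).
  exists (\row_k a k); apply: val_inj; rewrite crfE /= HX Ha.
  by apply: eq_bigr => k _; rewrite mxE.
have Hth : forall y, pi ((sigma \o i) y) = 0 by move=> y; rewrite /= Hsig pi0.
pose th := crf Hth.
have [tht Htht] := HP1 _ _ gam th gsurj.
have Htht' : forall y, tht y *m X = sigma (i y).
  by move=> y; have := congr1 val (Htht y); rewrite !crfE.
have HY : forall v : 'rV[R]_n, {y : P1 | pi v = 0 -> tau v = i y}.
  move=> v; apply: constructive_indefinite_description.
  case: (classic (pi v = 0)) => [Hv|Hv]; last by exists 0.
  have : p (tau v) = 0 by rewrite ptau.
  by case/Hex => y ->; exists y.
pose Y (v : 'rV[R]_n) : P1 := proj1_sig (HY v).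
have HYv : forall v : 'rV[R]_n, pi v = 0 -> tau v = i (Y v) by move=> v; exact: (proj2_sig (HY v)).
exists m, x, (fun k (v : 'rV[R]_n) => \sum_j v 0 j * C j k + tht (Y v) 0 k); split => //.
  move=> k a u v Hu Hv.
  have Hauv : pi (a *: u + v) = 0 by rewrite linearP Hu Hv scaler0 addr0.
  have EY : Y (a *: u + v) = a *: Y u + Y v.
    apply: iinj; rewrite -HYv // tauL linearP -!HYv //.
  rewrite EY linearP !mxE.
  have -> : \sum_j (a *: u + v) 0 j * C j k = a * (\sum_j u 0 j * C j k) + \sum_j v 0 j * C j k.
    by rewrite big_distrr -big_split; apply: eq_bigr => j _; rewrite !mxE /=; ring.
  ring.
move=> v Hv.
under eq_bigr => k _ do rewrite scalerDl.
rewrite big_split /= -HX Htht' -HYv //.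
have -> : \sum_k (\sum_j v 0 j * C j k) *: x k = \sum_j v 0 j *: D j.
  under eq_bigr => k _ do rewrite scaler_suml.
  rewrite exchange_big /=; apply: eq_bigr => j _.
  by rewrite (HC j) scaler_sumr; apply: eq_bigr => k _; rewrite scalerA.
have -> : \sum_j v 0 j *: D j = v - sigma (tau v).
  rewrite /D /tau linear_sum; under eq_bigr => j _ do rewrite scalerBr.
  rewrite sumrB -row_sum_delta; congr (_ - _); apply: eq_bigr => j _.
  by rewrite linearZ.
by rewrite subrK.
Qed.
End DualBasis.

Unset Implicit Arguments.

Theorem propositionC7 (R : comNzRingType) (M : lmodType R) (n : nat)
  (pi : {linear 'rV[R]_n -> M}) :
  noetherian R -> (0 < n)%N -> surjective_map pi ->
  (forall r, Fitt0 pi r -> char_pres pi r) /\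
  (proj_dim_le1 M -> forall r, Fitt0 pi r <-> char_pres pi r).
Proof.
move=> HN n0 Hs; split => [r|Hpd r]; first exact: fitt_char.
split; first exact: fitt_char.
move=> [Phi [HPhi ->]].
have [m [x [f [Hx Hf Hdb]]]] := dual_basis HN Hs Hpd.
exact: (char_fitt HPhi n0 Hx Hf Hdb).
Qed.
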